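(* Let $X_{\Omega_-}$ and $X_{\Omega_+}$ be convex toric domains in $\mathbb{R}^4$. Suppose that for every pair of relatively prime positive integers $a,b>0$ we have $\|(a,b)\|^*_{\Omega_-}\le\|(a,b)\|^*_{\Omega_+}$. Then $\Omega_-\subset\Omega_+$.
   Context: Let $\mu:\mathbb{C}^2\to\mathbb{R}^2_{\ge0}$, $\mu(z_1,z_2)=(\pi|z_1|^2,\pi|z_2|^2)$. Let $\Omega\subset\mathbb{R}^2_{\ge0}$ be compact with $0\in\operatorname{int}(\Omega)$, whose boundary consists of the segment from $(0,0)$ to $(a(\Omega),0)$, the segment from $(0,0)$ to $(0,b(\Omega))$ (with $a(\Omega),b(\Omega)>0$), and a continuous curve $\partial_+\Omega$ from $(a(\Omega),0)$ to $(0,b(\Omega))$ meeting the axes only at its endpoints. $X_\Omega=\mu^{-1}(\Omega)$ is a convex toric domain if $\{\mu\in\mathbb{R}^2:(|\mu_1|,|\mu_2|)\in\Omega\}$ is convex. For $(a,b)\in\mathbb{Z}^2_{\ge0}$, $\|(a,b)\|^*_\Omega=\max\{ax+by:(x,y)\in\Omega\}$ (in the paper this quantity is the $\Omega$-action $\mathcal{A}_\Omega(e_{a,b})$). *)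

(* Defs.v *)
From HB Require Import structures.
From mathcomp Require Import all_boot all_order all_algebra.
From mathcomp Require Import all_classical all_reals all_analysis.
Set Implicit Arguments. Unset Strict Implicit. Unset Printing Implicit Defensive.
Import Order.TTheory GRing.Theory Num.Theory.
Import numFieldNormedType.Exports.
Local Open Scope classical_set_scope.
Local Open Scope ring_scope.

Section Toric.
Variable R : realType.

Definition bdry (A : set (R * R)) : set (R * R) := closure A `\` interior A.

Definition toric_region (Om : set (R * R)) : Prop :=
  [/\ Om `<=` [set p | 0 <= p.1 /\ 0 <= p.2],
      compact Om,
      (exists2 e : R, 0 < e &
         [set p | 0 <= p.1 < e /\ 0 <= p.2 < e] `<=` Om) &
      exists a b : R, 0 < a /\ 0 < b /\
      exists g : R -> R * R,
        [/\ {within `[0, 1], continuous g},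
            g 0 = (a, 0), g 1 = (0, b),
            (forall t : R, 0 < t < 1 -> 0 < (g t).1 /\ 0 < (g t).2) &
            bdry Om =
              [set p | 0 <= p.1 <= a /\ p.2 = 0]
              `|` [set p | p.1 = 0 /\ 0 <= p.2 <= b]
              `|` (g @` `[0, 1])]].

Definition symmetrize (Om : set (R * R)) : set (R * R) :=
  [set p | Om (`|p.1|, `|p.2|)].

Definition convex_set2 (S : set (R * R)) : Prop :=
  forall p q, S p -> S q -> forall t : R, 0 <= t <= 1 ->
    S (t * p.1 + (1 - t) * q.1, t * p.2 + (1 - t) * q.2).

Definition convex_toric_domain (Om : set (R * R)) : Prop :=
  toric_region Om /\ convex_set2 (symmetrize Om).

Definition dual_norm (Om : set (R * R)) (a b : nat) : R :=
  sup [set a%:R * p.1 + b%:R * p.2 | p in Om].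

End Toric.

(* Main.v *)
Require Import Defs.
From HB Require Import structures.
From mathcomp Require Import all_boot all_order all_algebra.
From mathcomp Require Import all_classical all_reals all_analysis.
From mathcomp Require Import ring lra.
Import Order.TTheory GRing.Theory Num.Theory.
Import numFieldNormedType.Exports.
Local Open Scope classical_set_scope.
Local Open Scope ring_scope.

Lemma cont_sq {R : realType} (c d : R) :
  continuous (fun x : R * R => (x.1 - c) ^+ 2 + (x.2 - d) ^+ 2).
Proof.
move=> x; apply: cvgD; apply: cvgM;
(apply: cvgB; [|exact: cvg_cst]); [exact: cvg_fst|exact: cvg_fst|exact: cvg_snd|exact: cvg_snd].
Qed.

Lemma cont_lin {R : realType} (a b : R) :
  continuous (fun x : R * R => a * x.1 + b * x.2).
Proof.
move=> x; apply: cvgD; apply: cvgM; try exact: cvg_cst; [exact: cvg_fst|exact: cvg_snd].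
Qed.

Lemma ctd_quad {R : realType} {Om : set (R * R)} :
  convex_toric_domain Om -> forall x, Om x -> 0 <= x.1 /\ 0 <= x.2.
Proof. by case=> -[Hq _ _ _] _ x /Hq. Qed.

Lemma ctd_zero {R : realType} {Om : set (R * R)} :
  convex_toric_domain Om -> Om (0, 0).
Proof.
case=> -[_ _ [e e0 He] _] _; apply: He => /=; by rewrite lexx e0.
Qed.

Lemma ctd_compact {R : realType} {Om : set (R * R)} :
  convex_toric_domain Om -> compact Om.
Proof. by case=> -[]. Qed.

Lemma ctd_conv {R : realType} {Om : set (R * R)} :
  convex_toric_domain Om -> forall x y t, Om x -> Om y -> 0 <= t <= 1 ->
  Om (t * x.1 + (1 - t) * y.1, t * x.2 + (1 - t) * y.2).
Proof.
move=> H x y t Hx Hy Ht.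
have [x1 x2] := ctd_quad H _ Hx; have [y1 y2] := ctd_quad H _ Hy.
case: H => _ Hc.
have Sx : symmetrize Om x by rewrite /symmetrize /= !ger0_norm // -surjective_pairing.
have Sy : symmetrize Om y by rewrite /symmetrize /= !ger0_norm // -surjective_pairing.
have := Hc _ _ Sx Sy t Ht; rewrite /symmetrize /=.
move/andP: Ht => [t0 t1].
have t1' : 0 <= 1 - t by rewrite subr_ge0.
by rewrite !ger0_norm // addr_ge0 // mulr_ge0.
Qed.

Lemma ctd_down1 {R : realType} {Om : set (R * R)} :
  convex_toric_domain Om -> forall x s, Om x -> 0 <= s <= x.1 -> Om (s, x.2).
Proof.
move=> H x s Hx /andP[s0 sx].
have [x1 x2] := ctd_quad H _ Hx.
have [x10|x1p] := eqVneq x.1 0.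
  have -> : s = 0 by apply/eqP; rewrite eq_le s0 -x10 sx.
  by rewrite -x10 -surjective_pairing.
have x1p' : 0 < x.1 by rewrite lt_neqAle eq_sym x1p x1.
case: H => _ Hc.
have Sx : symmetrize Om x by rewrite /symmetrize /= !ger0_norm // -surjective_pairing.
have Sy : symmetrize Om (- x.1, x.2) by rewrite /symmetrize /= normrN !ger0_norm // -surjective_pairing.
pose t := (s + x.1) / (2 * x.1).
have h2 : 2 * x.1 != 0 by rewrite gt_eqF // mulr_gt0.
have ht : t * (2 * x.1) = s + x.1 by rewrite /t divfK.
have Ht : 0 <= t <= 1.
  apply/andP; split; first by rewrite /t divr_ge0 // ?addr_ge0 // mulr_ge0.
  by rewrite /t ler_pdivrMr ?mulr_gt0 // mul1r; lra.
have := Hc _ _ Sx Sy t Ht; rewrite /symmetrize /=.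
have -> : t * x.1 + (1 - t) * - x.1 = s by nra.
have -> : t * x.2 + (1 - t) * x.2 = x.2 by ring.
by rewrite !ger0_norm.
Qed.

Lemma ctd_down2 {R : realType} {Om : set (R * R)} :
  convex_toric_domain Om -> forall x s, Om x -> 0 <= s <= x.2 -> Om (x.1, s).
Proof.
move=> H x s Hx /andP[s0 sx].
have [x1 x2] := ctd_quad H _ Hx.
have [x20|x2p] := eqVneq x.2 0.
  have -> : s = 0 by apply/eqP; rewrite eq_le s0 -x20 sx.
  by rewrite -x20 -surjective_pairing.
have x2p' : 0 < x.2 by rewrite lt_neqAle eq_sym x2p x2.
case: H => _ Hc.
have Sx : symmetrize Om x by rewrite /symmetrize /= !ger0_norm // -surjective_pairing.
have Sy : symmetrize Om (x.1, - x.2) by rewrite /symmetrize /= normrN !ger0_norm // -surjective_pairing.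
pose t := (s + x.2) / (2 * x.2).
have h2 : 2 * x.2 != 0 by rewrite gt_eqF // mulr_gt0.
have ht : t * (2 * x.2) = s + x.2 by rewrite /t divfK.
have Ht : 0 <= t <= 1.
  apply/andP; split; first by rewrite /t divr_ge0 // ?addr_ge0 // mulr_ge0.
  by rewrite /t ler_pdivrMr ?mulr_gt0 // mul1r; lra.
have := Hc _ _ Sx Sy t Ht; rewrite /symmetrize /=.
have -> : t * x.2 + (1 - t) * - x.2 = s by nra.
have -> : t * x.1 + (1 - t) * x.1 = x.1 by ring.
by rewrite !ger0_norm.
Qed.

Lemma ctd_has_sup {R : realType} {Om : set (R * R)} (a b : R) :
  convex_toric_domain Om -> has_sup [set a * p.1 + b * p.2 | p in Om].
Proof.
move=> H; apply: compact_has_sup.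
  by exists (a * 0 + b * 0); exists (0, 0) => //; exact: ctd_zero.
apply: continuous_compact; last exact: ctd_compact.
exact/continuous_subspaceT/cont_lin.
Qed.

Lemma final_step {R : realType} (Om_minus Om_plus : set (R * R)) (x : R * R)
  (k1 k2 : nat) (C : R) :
  convex_toric_domain Om_minus ->
  convex_toric_domain Om_plus ->
  (forall a b : nat, (0 < a)%N -> (0 < b)%N -> coprime a b ->
     dual_norm Om_minus a b <= dual_norm Om_plus a b) ->
  Om_minus x -> (0 < k1)%N -> (0 < k2)%N ->
  (forall y, Om_plus y -> k1%:R * y.1 + k2%:R * y.2 <= C) ->
  C < k1%:R * x.1 + k2%:R * x.2 -> False.
Proof.
move=> Hm Hp Hd Hx k1p k2p HC HCx.
pose g := gcdn k1 k2.
have gp : (0 < g)%N by rewrite gcdn_gt0 k1p.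
pose a := (k1 %/ g)%N; pose b := (k2 %/ g)%N.
have ka : k1 = (a * g)%N by rewrite /a divnK // dvdn_gcdl.
have kb : k2 = (b * g)%N by rewrite /b divnK // dvdn_gcdr.
have ap : (0 < a)%N by rewrite /a divn_gt0 // dvdn_leq // dvdn_gcdl.
have bp : (0 < b)%N by rewrite /b divn_gt0 // dvdn_leq // dvdn_gcdr.
have cop : coprime a b.
  rewrite /coprime -(eqn_pmul2r gp) muln_gcdl -ka -kb mul1n.
  by [].
have := Hd a b ap bp cop.
have gR : 0 < g%:R :> R by rewrite ltr0n.
pose C' := C / g%:R.
have hC : C = g%:R * C' by rewrite /C' mulrC divfK // gt_eqF.
have H1 : dual_norm Om_plus a b <= C'.
  apply: ge_sup.
    by exists (a%:R * 0 + b%:R * 0); exists (0, 0) => //; exact: ctd_zero.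
  move=> z [y Hy <-].
  have := HC y Hy; rewrite ka kb !natrM hC.
  move=> h; rewrite -(ler_pM2l gR).
  have -> : g%:R * (a%:R * y.1 + b%:R * y.2) =
    a%:R * g%:R * y.1 + b%:R * g%:R * y.2 :> R by ring.
  exact: h.
have H2 : a%:R * x.1 + b%:R * x.2 <= dual_norm Om_minus a b.
  apply: sup_upper_bound; first exact: ctd_has_sup.
  by exists x.
move: HCx; rewrite ka kb !natrM hC => HCx Hdd.
have : g%:R * C' < g%:R * (a%:R * x.1 + b%:R * x.2).
  have -> : g%:R * (a%:R * x.1 + b%:R * x.2) =
    a%:R * g%:R * x.1 + b%:R * g%:R * x.2 :> R by ring.
  exact: HCx.
rewrite ltr_pM2l // => H3.
have := lt_le_trans H3 (le_trans H2 (le_trans Hdd H1)).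
by rewrite ltxx.
Qed.

Theorem lemma3p5 (R : realType) (Om_minus Om_plus : set (R * R)) :
  convex_toric_domain Om_minus ->
  convex_toric_domain Om_plus ->
  (forall a b : nat, (0 < a)%N -> (0 < b)%N -> coprime a b ->
     dual_norm Om_minus a b <= dual_norm Om_plus a b) ->
  Om_minus `<=` Om_plus.
Proof.
move=> Hm Hp Hd x Hx.
have [//|Hnx] := pselect (Om_plus x).
exfalso.
have [x1 x2] := ctd_quad Hm _ Hx.
have Hne : Om_plus !=set0 by exists (0, 0); exact: ctd_zero.
have cf : {within Om_plus, continuous
    (fun y : R * R => (y.1 - x.1) ^+ 2 + (y.2 - x.2) ^+ 2)}.
  by apply: continuous_subspaceT; exact: cont_sq.
have [q /set_mem Hq qmin] := compact_EVT_min Hne (ctd_compact Hp) cf.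
have fmin : forall y, Om_plus y ->
    (q.1 - x.1) ^+ 2 + (q.2 - x.2) ^+ 2 <= (y.1 - x.1) ^+ 2 + (y.2 - x.2) ^+ 2.
  by move=> y Hy; apply: qmin; exact: mem_set.
have [q1 q2] := ctd_quad Hp _ Hq.
pose u1 := x.1 - q.1; pose u2 := x.2 - q.2.
have u1p : 0 <= u1.
  rewrite /u1 subr_ge0; case: (leP q.1 x.1) => // h.
  have := fmin _ (ctd_down1 Hp q x.1 Hq _); rewrite x1 ltW //= => /(_ isT).
  nra.
have u2p : 0 <= u2.
  rewrite /u2 subr_ge0; case: (leP q.2 x.2) => // h.
  have := fmin _ (ctd_down2 Hp q x.2 Hq _); rewrite x2 ltW //= => /(_ isT).
  nra.
have Np : 0 < u1 ^+ 2 + u2 ^+ 2.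
  case: (ltrP 0 (u1 ^+ 2 + u2 ^+ 2)) => // hN.
  have s1 := sqr_ge0 u1; have s2 := sqr_ge0 u2.
  have h1 : u1 ^+ 2 = 0 by apply/eqP; rewrite eq_le s1 andbT; lra.
  have h2 : u2 ^+ 2 = 0 by apply/eqP; rewrite eq_le s2 andbT; lra.
  move/eqP: h1; rewrite sqrf_eq0 subr_eq0 => /eqP e1.
  move/eqP: h2; rewrite sqrf_eq0 subr_eq0 => /eqP e2.
  by case: Hnx; rewrite [x]surjective_pairing e1 e2 -surjective_pairing.
have var : forall y, Om_plus y ->
    u1 * y.1 + u2 * y.2 <= u1 * q.1 + u2 * q.2.
  move=> y Hy.
  case: (leP (u1 * y.1 + u2 * y.2) (u1 * q.1 + u2 * q.2)) => // hc.
  exfalso.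
  pose c := u1 * (y.1 - q.1) + u2 * (y.2 - q.2).
  have cp : 0 < c by rewrite /c !mulrBr; lra.
  pose D := (y.1 - q.1) ^+ 2 + (y.2 - q.2) ^+ 2.
  have Dp : 0 <= D by rewrite /D addr_ge0 // sqr_ge0.
  have Dcp : 0 < D + c by lra.
  pose t := c / (D + c).
  have ht : t * (D + c) = c by rewrite /t divfK // gt_eqF.
  have tp : 0 < t by rewrite /t divr_gt0.
  have t1 : t <= 1 by rewrite /t ler_pdivrMr // mul1r; lra.
  have Hz := ctd_conv Hp y q t Hy Hq (introT andP (conj (ltW tp) t1)).
  have := fmin _ Hz => /=.
  rewrite -subr_ge0.
  have -> : (t * y.1 + (1 - t) * q.1 - x.1) ^+ 2 + (t * y.2 + (1 - t) * q.2 - x.2) ^+ 2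
     - ((q.1 - x.1) ^+ 2 + (q.2 - x.2) ^+ 2) = t * (t * D - 2 * c)
    by rewrite /D /c /u1 /u2; ring.
  rewrite pmulr_rge0 // => h.
  have htc : 0 < t * c by rewrite mulr_gt0.
  have htD : t * D = c - t * c by move: ht; rewrite mulrDr; lra.
  lra.
have Hs := ctd_has_sup 1 1 Hp.
pose S := sup [set 1 * p.1 + 1 * p.2 | p in Om_plus].
have hS : forall y, Om_plus y -> y.1 + y.2 <= S.
  move=> y Hy; have h := sup_upper_bound Hs.
  have hy : [set 1 * p.1 + 1 * p.2 | p in Om_plus] (1 * y.1 + 1 * y.2) by exists y.
  by have := h _ hy; rewrite !mul1r.
pose N := u1 ^+ 2 + u2 ^+ 2.
pose n := (Num.truncn (S / N)).+1.
have hn : S < n%:R * N by rewrite -ltr_pdivrMr //; exact: truncnS_gt.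
have hn0 : 0 <= n%:R :> R by [].
pose k1 := (Num.truncn (u1 * n%:R)).+1.
pose k2 := (Num.truncn (u2 * n%:R)).+1.
have hk1a : u1 * n%:R < k1%:R by exact: truncnS_gt.
have hk2a : u2 * n%:R < k2%:R by exact: truncnS_gt.
have hk1b : k1%:R <= u1 * n%:R + 1 :> R.
  by rewrite /k1 -natr1 lerD2r truncn_le mulr_ge0.
have hk2b : k2%:R <= u2 * n%:R + 1 :> R.
  by rewrite /k2 -natr1 lerD2r truncn_le mulr_ge0.
apply: (@final_step R Om_minus Om_plus x k1 k2
  (n%:R * (u1 * q.1 + u2 * q.2) + S) Hm Hp Hd Hx isT isT).
  move=> y Hy.
  have [y1 y2] := ctd_quad Hp _ Hy.
  have hA1 := ler_wpM2r y1 hk1b.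
  have hA2 := ler_wpM2r y2 hk2b.
  have hB := ler_wpM2l hn0 (var y Hy).
  have := hS y Hy.
  lra.
have hA1 := ler_wpM2r x1 (ltW hk1a).
have hA2 := ler_wpM2r x2 (ltW hk2a).
have E : u1 * x.1 + u2 * x.2 = u1 * q.1 + u2 * q.2 + N by rewrite /N /u1 /u2; ring.
have E2 : n%:R * (u1 * x.1 + u2 * x.2) = n%:R * (u1 * q.1 + u2 * q.2) + n%:R * N
  by rewrite E; ring.
lra.
Qed.
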